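(* Let $\Theta=(\theta,w)$ be a twisted partial action of a group $G$ on an inverse semigroup $S$. Then the crossed product $S*_\Theta G$ is an inverse semigroup, and for every $s\delta_x\in S*_\Theta G$, $$(s\delta_x)^{-1}=w_{x^{-1},x}^{-1}\theta_{x^{-1}}(s^{-1})\delta_{x^{-1}}.$$
   Context: A multiplier of a semigroup $T$ is a pair $(L,R)$ of maps $T\to T$ with $L(st)=L(s)t$, $R(st)=sR(t)$, $sL(t)=R(s)t$; write $ws=L(s)$, $sw=R(s)$. Multipliers form a monoid $\mathcal M(T)$ with $(L,R)(L',R')=(L\circ L',R'\circ R)$, with unit group $\mathcal U(\mathcal M(T))$. A twisted partial action of $G$ on a semigroup $S$ is $\Theta=(\theta,w)$, where $\theta_x:D_{x^{-1}}\to D_x$ ($x\in G$) are isomorphisms between nonempty ideals of $S$ and $w_{x,y}\in\mathcal U(\mathcal M(D_xD_{xy}))$, such that (i) $D_x^2=D_x$, $D_xD_y=D_yD_x$; (ii) $D_1=S$, $\theta_1=\mathrm{id}_S$; (iii) $\theta_x(D_{x^{-1}}D_y)=D_xD_{xy}$; (iv) $\theta_x(\theta_y(s))=w_{x,y}\theta_{xy}(s)w_{x,y}^{-1}$ for $s\in D_{y^{-1}}D_{y^{-1}x^{-1}}$; (v) $w_{1,x}=w_{x,1}$ are the identity multiplier of $D_x$; (vi) $\theta_x(sw_{y,z})w_{x,yz}=\theta_x(s)w_{x,y}w_{xy,z}$ for $s\in D_{x^{-1}}D_yD_{yz}$. The crossed product is $S*_\Theta G=\{s\delta_x: x\in G,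 s\in D_x\}$ with $s\delta_x\cdot t\delta_y=\theta_x(\theta_x^{-1}(s)t)w_{x,y}\delta_{xy}$; it is an associative semigroup. *)

(* Defs.v *)
Set Implicit Arguments.

Record Grp := {
  gcar :> Type;
  gmul : gcar -> gcar -> gcar;
  gone : gcar;
  ginv : gcar -> gcar;
  gmulA : forall x y z, gmul x (gmul y z) = gmul (gmul x y) z;
  gmul1l : forall x, gmul gone x = x;
  gmul1r : forall x, gmul x gone = x;
  gmulVl : forall x, gmul (ginv x) x = gone;
  gmulVr : forall x, gmul x (ginv x) = gone
}.

Section SemigroupNotions.
Variable S : Type.
Variable mul : S -> S -> S.

Definition associative_op : Prop :=
  forall a b c, mul a (mul b c) = mul (mul a b) c.

Definition is_inverse_semigroup : Prop :=
  associative_op /\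
  forall a, exists b, (mul (mul a b) a = a /\ mul (mul b a) b = b) /\
    forall b', mul (mul a b') a = a -> mul (mul b' a) b' = b' -> b' = b.

Definition set_eq (A B : S -> Prop) : Prop := forall u, A u <-> B u.

Definition setmul (A B : S -> Prop) : S -> Prop :=
  fun u => exists a b, A a /\ B b /\ u = mul a b.

Definition is_ideal (A : S -> Prop) : Prop :=
  (exists s, A s) /\ forall s t, A s -> A (mul s t) /\ A (mul t s).

Definition image (f : S -> S) (A : S -> Prop) : S -> Prop :=
  fun u => exists s, A s /\ u = f s.

(** (L,R) is a multiplier of the subsemigroup I (maps are considered on I;
    we write w s = L s, s w = R s). *)
Definition is_multiplier (I : S -> Prop) (L R : S -> S) : Prop :=
  (forall s, I s -> I (L s)) /\ (forall s, I s -> I (R s)) /\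
  forall s t, I s -> I t ->
    L (mul s t) = mul (L s) t /\ R (mul s t) = mul s (R t) /\
    mul s (L t) = mul (R s) t.

(** (L,R) is a unit of the monoid M(I) of multipliers, with inverse (Li,Ri);
    product (L,R)(L',R') = (L o L', R' o R), unit = identity on I. *)
Definition is_unit_multiplier (I : S -> Prop) (L R Li Ri : S -> S) : Prop :=
  is_multiplier I L R /\ is_multiplier I Li Ri /\
  forall s, I s -> L (Li s) = s /\ Li (L s) = s /\ R (Ri s) = s /\ Ri (R s) = s.

End SemigroupNotions.

(** * Data of a twisted partial action of G on S.
    theta x : D (x^-1) -> D x, with inverse map thetainv x : D x -> D (x^-1);
    w x y = (wL x y, wR x y) a multiplier of D x D (x y), with inverse
    w x y ^-1 = (wLi x y, wRi x y).  Maps are total functions on S, only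
    their values on the relevant domains matter. *)
Record TPAData (G : Grp) (S : Type) := {
  tD : G -> S -> Prop;
  ttheta : G -> S -> S;
  tthetainv : G -> S -> S;
  twL : G -> G -> S -> S;
  twR : G -> G -> S -> S;
  twLi : G -> G -> S -> S;
  twRi : G -> G -> S -> S
}.

Section TPA.
Variables (G : Grp) (S : Type) (mul : S -> S -> S).
Variable T : TPAData G S.

Local Notation "x * y" := (gmul G x y).
Local Notation "x ^-1" := (ginv G x) (at level 2, format "x ^-1").
Local Notation "1" := (gone G).
Local Notation D := (tD T).
Local Notation theta := (ttheta T).
Local Notation thinv := (tthetainv T).
Local Notation wL := (twL T).
Local Notation wR := (twR T).
Local Notation wLi := (twLi T).
Local Notation wRi := (twRi T).
Local Notation "A ** B" := (setmul mul A B) (at level 40, left associativity).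

Definition is_iso_on (x : G) : Prop :=
  (forall s, D (x^-1) s -> D x (theta x s)) /\
  (forall t, D x t -> D (x^-1) (thinv x t)) /\
  (forall s t, D (x^-1) s -> D (x^-1) t ->
      theta x (mul s t) = mul (theta x s) (theta x t)) /\
  (forall s, D (x^-1) s -> thinv x (theta x s) = s) /\
  (forall t, D x t -> theta x (thinv x t) = t).

Definition is_twisted_partial_action : Prop :=
  (forall x, is_ideal mul (D x)) /\
  (forall x, is_iso_on x) /\
  (forall x y, is_unit_multiplier mul (D x ** D (x * y))
                  (wL x y) (wR x y) (wLi x y) (wRi x y)) /\
  (forall x, set_eq (D x ** D x) (D x)) /\
  (forall x y, set_eq (D x ** D y) (D y ** D x)) /\
  (forall s, D 1 s) /\
  (forall s, theta 1 s = s) /\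
  (forall x y, set_eq (image (theta x) (D (x^-1) ** D y)) (D x ** D (x * y))) /\
  (* (iv) theta_x(theta_y s) = w_{x,y} theta_{xy}(s) w_{x,y}^-1 *)
  (forall x y s, (D (y^-1) ** D (y^-1 * x^-1)) s ->
      theta x (theta y s) = wRi x y (wL x y (theta (x * y) s))) /\
  (* (v) w_{1,x} = w_{x,1} = identity multiplier of D x *)
  (forall x s, D x s ->
      wL 1 x s = s /\ wR 1 x s = s /\ wL x 1 s = s /\ wR x 1 s = s) /\
  (* (vi) theta_x(s w_{y,z}) w_{x,yz} = theta_x(s) w_{x,y} w_{xy,z} *)
  (forall x y z s, (D (x^-1) ** D y ** D (y * z)) s ->
      wR x (y * z) (theta x (wR y z s)) = wR (x * y) z (wR x y (theta x s))).

(** * Crossed product S *_Theta G, as the set of pairs (s, x) with s in D x,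
    i.e. s delta_x, with multiplication
    s delta_x . t delta_y = theta_x(theta_x^-1(s) t) w_{x,y} delta_{xy}. *)
Definition cp_carrier (p : S * G) : Prop := D (snd p) (fst p).

Definition cp_mul (p q : S * G) : S * G :=
  let (s, x) := p in let (t, y) := q in
  (wR x y (theta x (mul (thinv x s) t)), x * y).

End TPA.

(* Main.v *)
Require Import Defs.
Set Implicit Arguments.

Section Proof5.
Variables (G : Grp) (S : Type) (mul : S -> S -> S) (sinv : S -> S).
Hypothesis HS : is_inverse_semigroup mul.
Hypothesis Hsinv : forall s, mul (mul s (sinv s)) s = s /\ mul (mul (sinv s) s) (sinv s) = sinv s.
Variable T : TPAData G S.
Hypothesis HT : is_twisted_partial_action mul T.

Local Notation "x * y" := (gmul G x y).
Local Notation "x ^-1" := (ginv G x) (at level 2, format "x ^-1").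
Local Notation "1" := (gone G).
Local Notation D := (tD T).
Local Notation th := (ttheta T).
Local Notation thi := (tthetainv T).
Local Notation wL := (twL T).
Local Notation wR := (twR T).
Local Notation wLi := (twLi T).
Local Notation wRi := (twRi T).

Lemma ginv_uniq x y : x * y = 1 -> y = x^-1.
Proof.
  intro H. rewrite <- (gmul1l G y), <- (gmulVl G x), <- gmulA, H, gmul1r. reflexivity.
Qed.

Lemma ginvK x : (x^-1)^-1 = x.
Proof. symmetry. apply ginv_uniq. apply gmulVl. Qed.

Lemma ginv1 : 1^-1 = 1.
Proof. symmetry. apply ginv_uniq. apply gmul1l. Qed.

Lemma assoc a b c : mul a (mul b c) = mul (mul a b) c.
Proof. destruct HS as [H _]. apply H. Qed.

Lemma ideal x s t : D x s -> D x (mul s t) /\ D x (mul t s).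
Proof. destruct HT as [H _]. intro. apply (H x). auto. Qed.

Lemma iso x : is_iso_on mul T x.
Proof. destruct HT as [_ [H _]]. apply H. Qed.

Lemma DD x u : D x u -> exists a b, D x a /\ D x b /\ u = mul a b.
Proof. destruct HT as [_ [_ [_ [H _]]]]. intro Hu. apply (H x u). exact Hu. Qed.

Lemma D1 s : D 1 s.
Proof. destruct HT as [_ [_ [_ [_ [_ [H _]]]]]]. apply H. Qed.

Lemma th1 s : th 1 s = s.
Proof. destruct HT as [_ [_ [_ [_ [_ [_ [H _]]]]]]]. apply H. Qed.

Lemma thi1 s : thi 1 s = s.
Proof.
  destruct (iso 1) as [_ [_ [_ [H _]]]].
  transitivity (thi 1 (th 1 s)); [rewrite th1; reflexivity|]. apply H. rewrite ginv1. apply D1.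
Qed.

Lemma HIV x y s : setmul mul (D (y^-1)) (D (y^-1 * x^-1)) s ->
      th x (th y s) = wRi x y (wL x y (th (x * y) s)).
Proof. destruct HT as [_ [_ [_ [_ [_ [_ [_ [_ [H _]]]]]]]]]. apply H. Qed.

Lemma HV x s : D x s -> wL 1 x s = s /\ wR 1 x s = s /\ wL x 1 s = s /\ wR x 1 s = s.
Proof. destruct HT as [_ [_ [_ [_ [_ [_ [_ [_ [_ [H _]]]]]]]]]]. apply H. Qed.

Lemma HVI x y z s : setmul mul (setmul mul (D (x^-1)) (D y)) (D (y * z)) s ->
      wR x (y * z) (th x (wR y z s)) = wR (x * y) z (wR x y (th x s)).
Proof. destruct HT as [_ [_ [_ [_ [_ [_ [_ [_ [_ [_ H]]]]]]]]]]. apply H. Qed.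

Lemma Iequiv x u : setmul mul (D x) (D 1) u <-> D x u.
Proof.
  split.
  - intros [a [b [Ha [_ ->]]]]. apply (ideal x a b Ha).
  - intro Hu. destruct (DD x u Hu) as [a [b [Ha [_ ->]]]].
    exists a, b. split; [exact Ha|split; [apply D1|reflexivity]].
Qed.

Record MU (x : G) (L R Li Ri : S -> S) : Prop := {
  mL : forall s, D x s -> D x (L s);
  mR : forall s, D x s -> D x (R s);
  mLi : forall s, D x s -> D x (Li s);
  mRi : forall s, D x s -> D x (Ri s);
  mLmul : forall s t, D x s -> D x t -> L (mul s t) = mul (L s) t;
  mRmul : forall s t, D x s -> D x t -> R (mul s t) = mul s (R t);
  mLR : forall s t, D x s -> D x t -> mul s (L t) = mul (R s) t;
  mLimul : forall s t, D x s -> D x t -> Li (mul s t) = mul (Li s) t;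
  mRimul : forall s t, D x s -> D x t -> Ri (mul s t) = mul s (Ri t);
  mLLi : forall s, D x s -> L (Li s) = s;
  mLiL : forall s, D x s -> Li (L s) = s;
  mRRi : forall s, D x s -> R (Ri s) = s;
  mRiR : forall s, D x s -> Ri (R s) = s
}.

Lemma getMU x y : x * y = 1 -> MU x (wL x y) (wR x y) (wLi x y) (wRi x y).
Proof.
  intro Hxy.
  destruct HT as [_ [_ [H _]]].
  destruct (H x y) as [[h1 [h2 h3]] [[h4 [h5 h6]] h7]].
  rewrite Hxy in *.
  constructor; intros.
  - apply Iequiv, h1, Iequiv; auto.
  - apply Iequiv, h2, Iequiv; auto.
  - apply Iequiv, h4, Iequiv; auto.
  - apply Iequiv, h5, Iequiv; auto.
  - apply h3; apply Iequiv; auto.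
  - apply h3; apply Iequiv; auto.
  - apply h3; apply Iequiv; auto.
  - apply h6; apply Iequiv; auto.
  - apply h6; apply Iequiv; auto.
  - apply h7; apply Iequiv; auto.
  - apply h7; apply Iequiv; auto.
  - apply h7; apply Iequiv; auto.
  - apply h7; apply Iequiv; auto.
Qed.

Lemma MU_comm x L R Li Ri : MU x L R Li Ri ->
  forall s, D x s -> Li (Ri s) = Ri (Li s).
Proof.
  intros M s Hs. destruct (DD x s Hs) as [a [b [Ha [Hb ->]]]].
  rewrite (mRimul M) by auto. rewrite (mLimul M) by (auto; apply (mRi M); auto).
  rewrite (mLimul M) by auto. rewrite (mRimul M) by (auto; apply (mLi M); auto).
  reflexivity.
Qed.

Lemma Dsinv x s : D x s -> D x (sinv s).
Proof.
  intro Hs. destruct (Hsinv s) as [_ H]. rewrite <- H.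
  exact (proj1 (ideal x _ (sinv s) (proj2 (ideal x s (sinv s) Hs)))).
Qed.

Lemma idL x s t : D x s -> D x (mul s t).
Proof. intro H. exact (proj1 (ideal x s t H)). Qed.
Lemma idR x s t : D x s -> D x (mul t s).
Proof. intro H. exact (proj2 (ideal x s t H)). Qed.

Lemma thD x s : D (x^-1) s -> D x (th x s).
Proof. destruct (iso x) as [H _]. apply H. Qed.

Lemma thiD x s : D x s -> D (x^-1) (thi x s).
Proof. destruct (iso x) as [_ [H _]]. apply H. Qed.

Lemma thmul x s t : D (x^-1) s -> D (x^-1) t -> th x (mul s t) = mul (th x s) (th x t).
Proof. destruct (iso x) as [_ [_ [H _]]]. apply H. Qed.

Lemma thith x s : D (x^-1) s -> thi x (th x s) = s.
Proof. destruct (iso x) as [_ [_ [_ [H _]]]]. apply H. Qed.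

Lemma ththi x s : D x s -> th x (thi x s) = s.
Proof. destruct (iso x) as [_ [_ [_ [_ H]]]]. apply H. Qed.

Lemma Mx x : MU x (wL x x^-1) (wR x x^-1) (wLi x x^-1) (wRi x x^-1).
Proof. apply getMU, gmulVr. Qed.

Lemma Mxi x : MU (x^-1) (wL x^-1 x) (wR x^-1 x) (wLi x^-1 x) (wRi x^-1 x).
Proof. apply getMU, gmulVl. Qed.

Lemma cp_left s x t y : D x s -> D y t -> x * y = 1 ->
  cp_mul mul T (s, x) (t, y) = (mul s (wR x y (th x t)), 1).
Proof.
  intros Hs Ht Hxy. assert (Hy := ginv_uniq _ _ Hxy). subst y.
  unfold cp_mul. rewrite gmulVr. f_equal.
  rewrite thmul by (auto using thiD). rewrite ththi by auto.
  apply (mRmul (Mx x)); auto using thD.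
Qed.

Lemma cp_one e s x : D x s -> cp_mul mul T (e, 1) (s, x) = (mul e s, x).
Proof.
  intros Hs. unfold cp_mul. rewrite thi1, th1, gmul1l. f_equal.
  apply (HV x). apply idR. exact Hs.
Qed.

Lemma VI' x u : D (x^-1) u -> th x (wR x^-1 x u) = wR x x^-1 (th x u).
Proof.
  intro Hu.
  assert (Hm : setmul mul (setmul mul (D (x^-1)) (D (x^-1))) (D (x^-1 * x)) u).
  { rewrite gmulVl. destruct (DD _ u Hu) as [a [b [Ha [Hb ->]]]].
    destruct (DD _ a Ha) as [a1 [a2 [Ha1 [Ha2 ->]]]].
    exists (mul a1 a2), b. split; [exists a1, a2; auto|split; [apply D1|reflexivity]]. }
  assert (H := HVI x (x^-1) x Hm). rewrite gmulVl, gmulVr in H.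
  rewrite (proj2 (proj2 (proj2 (HV x _ (thD x _ (mR (Mxi x) _ Hu)))))) in H.
  rewrite (proj1 (proj2 (HV x _ (mR (Mx x) _ (thD x _ Hu))))) in H.
  exact H.
Qed.

Lemma IVa x s : D x s -> th x (th x^-1 s) = wRi x x^-1 (wL x x^-1 s).
Proof.
  intro Hs.
  assert (Hm : setmul mul (D ((x^-1)^-1)) (D ((x^-1)^-1 * x^-1)) s).
  { rewrite ginvK, gmulVr. apply Iequiv. exact Hs. }
  assert (H := HIV x (x^-1) Hm). rewrite gmulVr, th1 in H. exact H.
Qed.

Lemma IVb x u : D (x^-1) u -> th x^-1 (th x u) = wRi x^-1 x (wL x^-1 x u).
Proof.
  intro Hu.
  assert (Hm : setmul mul (D (x^-1)) (D (x^-1 * (x^-1)^-1)) u).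
  { rewrite ginvK, gmulVl. apply Iequiv. exact Hu. }
  assert (H := HIV (x^-1) x Hm). rewrite gmulVl, th1 in H. exact H.
Qed.

Lemma thiD' x s : D x s -> D (x^-1) (th x^-1 s).
Proof. intro Hs. apply thD. rewrite ginvK. exact Hs. Qed.

Lemma thd x s : D x s -> th x (wR x^-1 x (th x^-1 s)) = wL x x^-1 s.
Proof.
  intro Hs. rewrite VI' by (apply thiD'; auto).
  rewrite IVa by auto. apply (mRRi (Mx x)). apply (mL (Mx x)). auto.
Qed.

Lemma key x s t : D x s -> D (x^-1) t ->
  wR x x^-1 (th x (mul (mul t (wR x^-1 x (th x^-1 s))) t)) =
  mul (mul (wR x x^-1 (th x t)) s) (wR x x^-1 (th x t)).
Proof.
  intros Hs Ht.
  assert (Hd : D (x^-1) (wR x^-1 x (th x^-1 s))) by (apply (mR (Mxi x)); apply thiD'; auto).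
  rewrite thmul by auto using idL.
  rewrite thmul by auto. rewrite thd by auto.
  rewrite (mRmul (Mx x)) by (auto using thD, idL, (mL (Mx x))).
  rewrite (mLR (Mx x)) by auto using thD. reflexivity.
Qed.

Lemma Phi_inj x t1 t2 : D (x^-1) t1 -> D (x^-1) t2 ->
  wR x x^-1 (th x t1) = wR x x^-1 (th x t2) -> t1 = t2.
Proof.
  intros H1 H2 E.
  assert (E2 : th x t1 = th x t2).
  { rewrite <- (mRiR (Mx x) (th x t1)), <- (mRiR (Mx x) (th x t2)) by auto using thD.
    rewrite E. reflexivity. }
  rewrite <- (thith x t1), <- (thith x t2) by auto. rewrite E2. reflexivity.
Qed.

Lemma Phi_p' x s : D x s ->
  wR x x^-1 (th x (wLi x^-1 x (th x^-1 (sinv s)))) = sinv s.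
Proof.
  intro Hs. assert (Hr := Dsinv _ _ Hs).
  set (r := sinv s) in *. set (u := thi x r).
  assert (Hu : D (x^-1) u) by (apply thiD; auto).
  replace (th x^-1 r) with (th x^-1 (th x u)) by (unfold u; rewrite ththi; auto).
  rewrite IVb by auto.
  rewrite (MU_comm (Mxi x)) by (apply (mL (Mxi x)); auto).
  rewrite (mLiL (Mxi x)) by auto.
  rewrite <- VI' by (apply (mRi (Mxi x)); auto).
  rewrite (mRRi (Mxi x)) by auto. unfold u. apply ththi. auto.
Qed.

Lemma closure p q : cp_carrier T p -> cp_carrier T q -> cp_carrier T (cp_mul mul T p q).
Proof.
  destruct p as [s x], q as [t y]. unfold cp_carrier, cp_mul; simpl. intros Hs Ht.
  destruct HT as [_ [_ [HM [_ [_ [_ [_ [H3 _]]]]]]]].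
  destruct (HM x y) as [[_ [h2 _]] _].
  assert (HI : setmul mul (D x) (D (x * y)) (th x (mul (thi x s) t))).
  { apply (H3 x y). exists (mul (thi x s) t). split; [|reflexivity].
    exists (thi x s), t. split; [apply thiD; auto|split; auto]. }
  destruct (h2 _ HI) as [a [b [_ [Hb ->]]]]. apply ideal. exact Hb.
Qed.

Lemma part3 s x : D x s ->
    let p' := (wLi (x^-1) x (th (x^-1) (sinv s)), x^-1) in
    cp_carrier T p' /\
    cp_mul mul T (cp_mul mul T (s, x) p') (s, x) = (s, x) /\
    cp_mul mul T (cp_mul mul T p' (s, x)) p' = p' /\
    (forall b', cp_carrier T b' ->
        cp_mul mul T (cp_mul mul T (s, x) b') (s, x) = (s, x) ->
        cp_mul mul T (cp_mul mul T b' (s, x)) b' = b' -> b' = p').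
Proof.
  intros Hs p'. unfold p'. clear p'.
  set (t' := wLi (x^-1) x (th (x^-1) (sinv s))).
  assert (Ht' : D (x^-1) t') by (apply (mLi (Mxi x)); apply thiD'; apply Dsinv; auto).
  assert (HP : wR x x^-1 (th x t') = sinv s) by (apply Phi_p'; auto).
  assert (Hd : D (x^-1) (wR x^-1 x (th x^-1 s))) by (apply (mR (Mxi x)); apply thiD'; auto).
  split; [exact Ht'|].
  split.
  { rewrite cp_left by (auto using gmulVr). rewrite cp_one by auto.
    rewrite HP. f_equal. apply Hsinv. }
  split.
  { rewrite cp_left by (auto using gmulVl). rewrite cp_one by auto.
    f_equal. apply (Phi_inj x); [auto using idL|auto|].
    rewrite key by auto. rewrite HP. apply Hsinv. }
  intros [t y] Ht E1 E2. unfold cp_carrier in Ht; simpl in Ht.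
  assert (Ey : x * y = 1).
  { assert (E := f_equal snd E1). unfold cp_mul in E; simpl in E.
    transitivity (((x*y)*x)*x^-1). { rewrite <- gmulA, gmulVr, gmul1r; reflexivity. } rewrite E. apply gmulVr. }
  assert (Hy := ginv_uniq _ _ Ey). subst y.
  rewrite cp_left in E1 by auto. rewrite cp_one in E1 by auto.
  rewrite cp_left in E2 by (auto using gmulVl). rewrite cp_one in E2 by auto.
  injection E1 as E1. injection E2 as E2.
  assert (E3 : mul (mul (wR x x^-1 (th x t)) s) (wR x x^-1 (th x t)) = wR x x^-1 (th x t)).
  { rewrite <- key by auto. rewrite E2. reflexivity. }
  destruct HS as [_ Huniq]. destruct (Huniq s) as [b [_ Hb]].
  assert (Eb1 : wR x x^-1 (th x t) = b) by (apply Hb; auto).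
  assert (Eb2 : sinv s = b) by (apply Hb; apply Hsinv).
  f_equal. apply (Phi_inj x); auto. rewrite HP, Eb1, Eb2. reflexivity.
Qed.

End Proof5.

Theorem lemma5p12 (G : Grp) (S : Type) (mul : S -> S -> S) (sinv : S -> S)
  (HS : is_inverse_semigroup mul)
  (Hsinv : forall s, mul (mul s (sinv s)) s = s /\ mul (mul (sinv s) s) (sinv s) = sinv s)
  (T : TPAData G S)
  (HT : is_twisted_partial_action mul T) :
  (forall p q, cp_carrier T p -> cp_carrier T q ->
      cp_carrier T (cp_mul mul T p q)) /\
  (forall p, cp_carrier T p -> exists b, cp_carrier T b /\
      (cp_mul mul T (cp_mul mul T p b) p = p /\
       cp_mul mul T (cp_mul mul T b p) b = b) /\
      forall b', cp_carrier T b' ->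
        cp_mul mul T (cp_mul mul T p b') p = p ->
        cp_mul mul T (cp_mul mul T b' p) b' = b' -> b' = b) /\
  (forall (s : S) (x : G), tD T x s ->
    let p' := (twLi T (ginv G x) x (ttheta T (ginv G x) (sinv s)), ginv G x) in
    cp_carrier T p' /\
    cp_mul mul T (cp_mul mul T (s, x) p') (s, x) = (s, x) /\
    cp_mul mul T (cp_mul mul T p' (s, x)) p' = p' /\
    (forall b', cp_carrier T b' ->
        cp_mul mul T (cp_mul mul T (s, x) b') (s, x) = (s, x) ->
        cp_mul mul T (cp_mul mul T b' (s, x)) b' = b' -> b' = p')).
Proof.
  split; [exact (closure HT)|].
  split; [|exact (part3 sinv HS Hsinv HT)].
  intros [s x] Hp. unfold cp_carrier in Hp; simpl in Hp.
  destruct (part3 sinv HS Hsinv HT _ _ Hp) as [A [B [C D]]].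
  eexists. split; [exact A|]. split; [split; [exact B|exact C]|exact D].
Qed.
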